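(* For every nonzero $\xi\in\mathbb{R}^4$ the sequence $0\leftarrow\mathbb{C}^3\xleftarrow{D_0(\xi)^t}\mathbb{C}^4\xleftarrow{D_1(\xi)^t}\mathbb{C}^1\leftarrow0$ is exact, i.e. $D_0(\xi)^t$ is surjective, $D_1(\xi)^t$ is injective and $\operatorname{Im}D_1(\xi)^t=\ker D_0(\xi)^t$.
   Context: With $\eta_0=\xi_0-i\xi_1$, $\eta_1=\xi_2-i\xi_3$ (so $\bar\eta_0=\xi_0+i\xi_1$, $\bar\eta_1=\xi_2+i\xi_3$ for real $\xi$), the symbol matrices (obtained from the 2-Cauchy–Fueter operators by replacing $\partial_{x_j}$ by $\frac1i\xi_j$), with $t$ denoting transpose, are $D_0(\xi)^t=\frac1i\begin{pmatrix}-\bar\eta_1&\eta_0&0&0\\-\bar\eta_0&-\eta_1&-\bar\eta_1&\eta_0\\0&0&-\bar\eta_0&-\eta_1\end{pmatrix}$ and $D_1(\xi)^t=\frac1i\begin{pmatrix}-\eta_0\\-\bar\eta_1\\\eta_1\\-\bar\eta_0\end{pmatrix}$. *)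

(* Defs.v *)
From HB Require Import structures.
From mathcomp Require Import all_boot all_order all_algebra.
From mathcomp Require Import complex.
From mathcomp Require Import reals.
Set Implicit Arguments. Unset Strict Implicit. Unset Printing Implicit Defensive.
Import Order.TTheory GRing.Theory Num.Theory.
Local Open Scope ring_scope.
Local Open Scope complex_scope.

Section Symbols.
Variable R : realType.
Notation C := (R[i]).

Definition cx (a : R) : C := a%:C.

Definition eta0 (xi : 'rV[R]_4) : C := cx (xi 0 0) - 'i * cx (xi 0 1).
Definition eta1 (xi : 'rV[R]_4) : C := cx (xi 0 2) - 'i * cx (xi 0 3).
Definition eta0b (xi : 'rV[R]_4) : C := cx (xi 0 0) + 'i * cx (xi 0 1).
Definition eta1b (xi : 'rV[R]_4) : C := cx (xi 0 2) + 'i * cx (xi 0 3).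

Definition D0t (xi : 'rV[R]_4) : 'M[C]_(3,4) :=
  ('i)^-1 *: \matrix_(i < 3, j < 4)
    nth 0 (nth [::] [:: [:: - eta1b xi; eta0 xi; 0; 0];
        [:: - eta0b xi; - eta1 xi; - eta1b xi; eta0 xi];
        [:: 0; 0; - eta0b xi; - eta1 xi]] i) j.

Definition D1t (xi : 'rV[R]_4) : 'M[C]_(4,1) :=
  ('i)^-1 *: \matrix_(i < 4, j < 1)
    [:: - eta0 xi; - eta1b xi; eta1 xi; - eta0b xi]`_i.
End Symbols.

(* Main.v *)
Require Import Defs.
From HB Require Import structures.
From mathcomp Require Import all_boot all_order all_algebra.
From mathcomp Require Import complex.
From mathcomp Require Import reals.
From mathcomp Require Import ring lra.
Import Order.TTheory GRing.Theory Num.Theory.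
Local Open Scope ring_scope.
Local Open Scope complex_scope.

Lemma Nval (R : realType) (xi : 'rV[R]_4) :
  eta0 xi * eta0b xi + eta1 xi * eta1b xi =
  ((xi 0 0)^+2 + (xi 0 1)^+2 + (xi 0 2)^+2 + (xi 0 3)^+2)%:C.
Proof.
rewrite /eta0 /eta0b /eta1 /eta1b /cx.
apply/eqP; rewrite eq_complex /=; apply/andP; split; apply/eqP; ring.
Qed.

Lemma Nnz {R : realType} {xi : 'rV[R]_4} (hxi : xi != 0) :
  eta0 xi * eta0b xi + eta1 xi * eta1b xi != 0.
Proof.
rewrite Nval.
have H : 0 < (xi 0 0)^+2 + (xi 0 1)^+2 + (xi 0 2)^+2 + (xi 0 3)^+2.
  case: (ltrgtP 0 ((xi 0 0)^+2 + (xi 0 1)^+2 + (xi 0 2)^+2 + (xi 0 3)^+2)) => // [|E].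
  - move=> h; exfalso. have := sqr_ge0 (xi 0 0); have := sqr_ge0 (xi 0 1);
    have := sqr_ge0 (xi 0 2); have := sqr_ge0 (xi 0 3). lra.
  - exfalso; move/eqP: hxi; apply; apply/matrixP => i j.
    rewrite (ord1 i) mxE.
    have h0 := sqr_ge0 (xi 0 0); have h1 := sqr_ge0 (xi 0 1);
    have h2 := sqr_ge0 (xi 0 2); have h3 := sqr_ge0 (xi 0 3).
    case: j => [[|[|[|[|//]]]] Hj].
    + apply/eqP; rewrite -sqrf_eq0; apply/eqP. rewrite (_ : Ordinal Hj = 0) //; last exact: val_inj. lra.
    + apply/eqP; rewrite -sqrf_eq0; apply/eqP. rewrite (_ : Ordinal Hj = 1) //; last exact: val_inj. lra.
    + apply/eqP; rewrite -sqrf_eq0; apply/eqP. rewrite (_ : Ordinal Hj = 2) //; last exact: val_inj. lra.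
    + apply/eqP; rewrite -sqrf_eq0; apply/eqP. rewrite (_ : Ordinal Hj = 3) //; last exact: val_inj. lra.
by rewrite eq_complex /= negb_and (gt_eqF H).
Qed.

Section S.
Variable R : realType.
Variable xi : 'rV[R]_4.
Hypothesis hN : eta0 xi * eta0b xi + eta1 xi * eta1b xi != 0.
Local Notation a := (eta0 xi). Local Notation ab := (eta0b xi). Local Notation b := (eta1 xi). Local Notation bb := (eta1b xi).
Local Notation N := (a * ab + b * bb).
Lemma i_nz : ('i : R[i]) != 0. Proof. by rewrite eq_complex /= negb_and oner_eq0 orbT. Qed.

Definition As : 'M[R[i]]_(4,3) := \matrix_(j<4,k<3) ('i * nth 0 (nth [::]
  [:: [:: -b/N; -a/(2*N); 0]; [:: ab/N; -bb/(2*N); 0];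
      [:: 0; -b/(2*N); -a/N]; [:: 0; ab/(2*N); -bb/N]] j) k).
Definition Bs : 'M[R[i]]_(1,4) := \matrix_(i<1,j<4) ('i/(2*N) * [:: -ab; -b; bb; -a]`_j).

Lemma two_nz : (2 : R[i]) != 0.
Proof. rewrite eq_complex /= negb_and. apply/orP; left. have : (0:R) < 1 + 1 by lra. by move/gt_eqF->. Qed.

Lemma id1 : D0t xi *m As = 1%:M.
Proof.
have hi := i_nz; have h2 := two_nz.
apply/matrixP => i j; rewrite !mxE !big_ord_recr big_ord0 /= !mxE /=.
case: i => [[|[|[|//]]] ?]; case: j => [[|[|[|//]]] ?] /=;
field; rewrite ?hN ?hi ?h2 //.
Qed.

Lemma id2 : Bs *m D1t xi = 1%:M.
Proof. have hi := i_nz; have h2 := two_nz. apply/matrixP => i j; rewrite !mxE ?big_ord_recr ?big_ord0 /= !mxE /=;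
  case: i => [[|[|[|[|i]]]] Hi] //=; case: j => [[|[|[|[|j]]]] Hj] //=;
  field; rewrite ?hN ?hi ?h2 //. Qed.
Lemma id3 : As *m D0t xi + D1t xi *m Bs = 1%:M.
Proof. have hi := i_nz; have h2 := two_nz. apply/matrixP => i j; rewrite !mxE ?big_ord_recr ?big_ord0 /= !mxE /=;
  case: i => [[|[|[|[|i]]]] Hi] //=; case: j => [[|[|[|[|j]]]] Hj] //=;
  field; rewrite ?hN ?hi ?h2 //. Qed.
Lemma id4 : D0t xi *m D1t xi = 0.
Proof. have hi := i_nz; have h2 := two_nz. apply/matrixP => i j; rewrite !mxE ?big_ord_recr ?big_ord0 /= !mxE /=;
  case: i => [[|[|[|[|i]]]] Hi] //=; case: j => [[|[|[|[|j]]]] Hj] //=;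
  field; rewrite ?hN ?hi ?h2 //. Qed.
End S.

Local Close Scope complex_scope.

Theorem lemma3p1 (R : realType) (xi : 'rV[R]_4) (hxi : xi != 0) :
  [/\ (forall w : 'cV[R[i]]_3, exists v : 'cV[R[i]]_4, D0t xi *m v = w),
      (forall u : 'cV[R[i]]_1, D1t xi *m u = 0 -> u = 0) &
      (forall v : 'cV[R[i]]_4,
         D0t xi *m v = 0 <-> exists u : 'cV[R[i]]_1, v = D1t xi *m u)].
Proof.
have hN := Nnz hxi.
split.
- move=> w; exists (@As _ xi *m w); by rewrite mulmxA (@id1 _ _ hN) mul1mx.
- move=> u hu; by rewrite -(mul1mx u) -(@id2 _ _ hN) -mulmxA hu mulmx0.
- move=> v; split.
  + move=> hv; exists (@Bs _ xi *m v).
    by rewrite -{1}(mul1mx v) -(@id3 _ _ hN) mulmxDl -!mulmxA hv mulmx0 add0r.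
  + by case=> u ->; rewrite mulmxA (@id4 _ xi) mul0mx.
Qed.
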